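(* Let $\{q_n\}$ be the Fibonacci Quilt sequence and, for $n,k\ge0$, let $q_{n,k}$ denote the number of integers $m\in[0,q_{n+1})$ whose Greedy-6 decomposition has exactly $k$ summands (with $0$ having the empty decomposition). Then \[q_{n,k}=\begin{cases}1 & k=0,\ n\ge0,\ \text{or } k=2,\ n=5,\\ n & k=1,\ n\ge0,\\ 1+\frac{(n-5)(n-4)}{2} & k=2,\ n\ge6,\\ q_{n-5,k-1}+q_{n-1,k} & k\ge3,\ n\ge5(k-1),\\ 0 & k\ge3,\ n<5(k-1),\ \text{or } k=2,\ n\le4,\end{cases}\] and $H(x,y)=\sum_{n\ge0}\sum_{k\ge0}q_{n,k}x^ny^k$ equals \[H(x,y)=\frac{1+(x+x^2+x^3+x^4)y+x^5y^2}{1-x-yx^5}.\]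
   Context: Here $q_{n,k}$ (two indices) is a counting function distinct from the sequence term $q_n$. Given an increasing sequence $\{q_i\}$, a decomposition $m=q_{\ell_1}+\dots+q_{\ell_t}$ with $q_{\ell_1}>\dots>q_{\ell_t}$ is FQ-legal if $|\ell_i-\ell_j|\notin\{0,1,3,4\}$ for $i\neq j$ and $\{1,3\}\not\subset\{\ell_1,\dots,\ell_t\}$. The Fibonacci Quilt sequence has $q_1=1$ and each $q_i$ ($i\ge2$) is the smallest positive integer with no FQ-legal decomposition using $q_1,\dots,q_{i-1}$ (it begins $1,2,3,4,5,7,9,12,\dots$). The Greedy-6 decomposition of a positive integer $m$: if $m=q_n$ it is $q_n$; if $m=6$ it is $q_4+q_2$; otherwise write $m=q_{\ell_1}+x$ with $q_{\ell_1}<m<q_{\ell_1+1}$, $x>0$, and iterate on $x$. *)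

(* Defs.v *)
From mathcomp Require Import all_boot all_order all_algebra.
From mathcomp Require Import boolp.
Set Implicit Arguments. Unset Strict Implicit. Unset Printing Implicit Defensive.
Import Order.TTheory GRing.Theory Num.Theory.

(* A sequence is q : nat -> nat, indexed from 1 (q 0 is irrelevant/unused). *)

Definition FQgap (a b : nat) : bool :=
  let d := if a <= b then b - a else a - b in d \notin [:: 0; 1; 3; 4].

(* s = [:: l_1; ...; l_t] lists the indices of the summands, with
   q l_1 > ... > q l_t. *)
Definition FQlegal (q : nat -> nat) (s : seq nat) : bool :=
  [&& sorted (fun a b => q b < q a) s,
      pairwise FQgap s
    & ~~ ((1 \in s) && (3 \in s))].

Definition has_FQdecomp (q : nat -> nat) (N m : nat) : Prop :=
  exists s : seq nat,
    [/\ all (fun l => (1 <= l) && (l <= N)) s, FQlegal q s & sumn (map q s) = m].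

Definition is_FQ_sequence (q : nat -> nat) : Prop :=
  q 1 = 1 /\
  forall i, 2 <= i ->
    [/\ 0 < q i,
        ~ has_FQdecomp q i.-1 (q i)
      & forall m, 0 < m < q i -> has_FQdecomp q i.-1 m].

Inductive greedy6 (q : nat -> nat) : nat -> seq nat -> Prop :=
| greedy6_zero : greedy6 q 0 [::]
| greedy6_term n : 1 <= n -> greedy6 q (q n) [:: n]
| greedy6_six : (forall n, 1 <= n -> q n <> 6) -> greedy6 q 6 [:: 4; 2]
| greedy6_step m l s :
    0 < m -> (forall n, 1 <= n -> q n <> m) -> m <> 6 ->
    1 <= l -> q l < m < q l.+1 ->
    greedy6 q (m - q l) s -> greedy6 q m (l :: s).

Definition qnk (q : nat -> nat) (n k : nat) : nat :=
  #|[set m : 'I_(q n.+1) | `[< exists s, greedy6 q m s /\ size s = k >] ]|.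

(* a n k is the coefficient of x^n y^k *)
Definition fps2 := nat -> nat -> int.
Local Open Scope ring_scope.
Definition fps2_add (a b : fps2) : fps2 := fun n k => a n k + b n k.
Definition fps2_opp (a : fps2) : fps2 := fun n k => - a n k.
Definition fps2_mul (a b : fps2) : fps2 :=
  fun n k => \sum_(i < n.+1) \sum_(j < k.+1) a i j * b (n - i)%N (k - j)%N.
Definition fps2_one : fps2 := fun n k => ((n == 0%N) && (k == 0%N) : nat)%:R.
Definition fps2_X : fps2 := fun n k => ((n == 1%N) && (k == 0%N) : nat)%:R.
Definition fps2_Y : fps2 := fun n k => ((n == 0%N) && (k == 1%N) : nat)%:R.
Definition fps2_pow (a : fps2) (e : nat) : fps2 := iter e (fps2_mul a) fps2_one.

Definition FQ_H (q : nat -> nat) : fps2 := fun n k => (qnk q n k)%:Z.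

Definition FQ_denom : fps2 :=
  fps2_add fps2_one
    (fps2_opp (fps2_add fps2_X (fps2_mul fps2_Y (fps2_pow fps2_X 5)))).

Definition FQ_numer : fps2 :=
  fps2_add fps2_one
   (fps2_add
     (fps2_mul (fps2_add fps2_X (fps2_add (fps2_pow fps2_X 2)
                 (fps2_add (fps2_pow fps2_X 3) (fps2_pow fps2_X 4)))) fps2_Y)
     (fps2_mul (fps2_pow fps2_X 5) (fps2_pow fps2_Y 2))).

(* Main.v *)
Require Import Defs.
From mathcomp Require Import all_boot all_order all_algebra.
From mathcomp Require Import boolp zify.

Lemma cardc N (b : nat -> bool) : #|[set m : 'I_N | b m]| = count b (iota 0 N).
Proof. rewrite cardsE -sum1_card -sum1_count.
have ->: iota 0 N = index_iota 0 N by rewrite /index_iota subn0. rewrite big_mkord. by apply: eq_bigl. Qed.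

Fixpoint fq (n : nat) : nat :=
  match n with
  | 0 => 0 | 1 => 1 | 2 => 2 | 3 => 3 | 4 => 4 | 5 => 5 | 6 => 7
  | S ((S (S (S (S ((S (S p)) as p2))))) as p6) => fq p6 + fq p2
  end.

Lemma fq_rec n : 6 <= n -> fq n.+1 = fq n + fq (n - 4).
Proof.
case: n => [|[|[|[|[|[|[|n]]]]]]] //= _.
Qed.


Lemma fq_inc n : fq n < fq n.+1.
Proof.
elim/ltn_ind: n => n IH.
case: (leqP 6 n) => h; last first.
  by case: n IH h => [|[|[|[|[|[|n]]]]]].
rewrite fq_rec //.
have: fq 0 < fq (n - 4).
  have hh : forall m, m.+1 < n -> fq 0 < fq m.+1.
    elim=> [//|m IHm] hm. apply: ltn_trans (IHm (ltnW hm)) _. apply: IH. lia.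
  have := hh (n - 5). have ->: (n - 5).+1 = n - 4 by lia. apply. lia.
simpl; lia.
Qed.

Lemma fq_lt : {homo fq : i j / i < j}.
Proof. apply: homo_ltn; [exact: ltn_trans | exact: fq_inc]. Qed.

Lemma fq_ltE i j : (fq i < fq j) = (i < j).
Proof.
apply/idP/idP; last exact: fq_lt.
case: (leqP j i) => // h; move=> h2.
have: fq j <= fq i. case: (ltngtP j i) h => // [/fq_lt /ltnW //| -> //].
by rewrite leqNgt h2.
Qed.

Lemma fq_leE i j : (fq i <= fq j) = (i <= j).
Proof. by rewrite leqNgt fq_ltE -leqNgt. Qed.

Lemma fq_inj : injective fq.
Proof. move=> i j h; apply/eqP; by rewrite eqn_leq -(fq_leE i j) -(fq_leE j i) h leqnn. Qed.

Lemma fq_ge n : n <= fq n.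
Proof. elim: n => // n IH; exact: leq_ltn_trans IH (fq_inc n). Qed.

Lemma fq_pos n : 0 < n -> 0 < fq n.
Proof. by move=> h; have := fq_ge n; lia. Qed.

Lemma fq_rec2 n : 4 <= n -> fq n.+1 = fq (n - 1) + fq (n - 2).
Proof.
elim/ltn_ind: n => n IH h.
case: (leqP 10 n) => h10; last first.
  by case: n IH h h10 => [|[|[|[|[|[|[|[|[|[|n]]]]]]]]]].
rewrite fq_rec; last lia.
have e1 : fq n = fq (n - 2) + fq (n - 3).
  have := IH (n - 1). have ->: (n - 1).+1 = n by lia.
  have ->: (n-1-1) = n - 2 by lia. have ->: (n-1-2) = n - 3 by lia. apply; lia.
have e2 : fq (n - 4) = fq (n - 6) + fq (n - 7).
  have := IH (n - 5). have ->: (n - 5).+1 = n - 4 by lia.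
  have ->: (n-5-1) = n - 6 by lia. have ->: (n-5-2) = n - 7 by lia. apply; lia.
have e3 : fq (n - 1) = fq (n - 2) + fq (n - 6).
  have := fq_rec (n - 2). have ->: (n - 2).+1 = n - 1 by lia. have ->: n - 2 - 4 = n - 6 by lia. apply; lia.
have e4 : fq (n - 2) = fq (n - 3) + fq (n - 7).
  have := fq_rec (n - 3). have ->: (n - 3).+1 = n - 2 by lia. have ->: n - 3 - 4 = n - 7 by lia. apply; lia.
lia.
Qed.

Definition gtr := fun a b : nat => b < a.

Lemma gapE a b : b < a -> FQgap a b = (b.+2 <= a) && ((b.+2 == a) || (b + 5 <= a)).
Proof.
move=> h; rewrite /FQgap leqNgt h /= !inE.
apply/idP/idP; lia.
Qed.

Lemma gapC a b : FQgap a b = FQgap b a.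
Proof. by rewrite /FQgap; case: (ltngtP a b) => // ->. Qed.

Definition leg (s : seq nat) :=
  [&& sorted gtr s, pairwise FQgap s & ~~ ((1 \in s) && (3 \in s))].

Lemma legalE s : FQlegal fq s = leg s.
Proof.
rewrite /FQlegal /leg.
have -> : (fun a b => fq b < fq a) = gtr.
  by apply/funext => a; apply/funext => b; rewrite fq_ltE.
by [].
Qed.

Lemma gtr_trans : transitive gtr.
Proof. move=> a b c; rewrite /gtr; lia. Qed.

Lemma leg_cons l s : leg (l :: s) ->
  [/\ all (gtr l) s, all (FQgap l) s & leg s].
Proof.
rewrite /leg pairwise_cons /= => /and3P [hs /andP [hg hp] h13].
split => //.
  exact: order_path_min gtr_trans hs.
rewrite (path_sorted hs) hp /=.
apply: contra h13; rewrite !inE => /andP [-> ->]; by rewrite !orbT.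
Qed.

Lemma sc x s : sumn (map fq (x :: s)) = fq x + sumn (map fq s).
Proof. by []. Qed.

Lemma sc0 : sumn (map fq [::]) = 0.
Proof. by []. Qed.

Lemma bound n : forall s l, size s < n -> leg (l :: s) ->
  sumn (map fq (l :: s)) < fq l.+3.
Proof.
elim: n => // n IH [|l' s] l hs hl.
  rewrite sc addn0 fq_ltE; lia.
case/leg_cons: (hl) => /andP [hll' hlall] /andP [hg hgall] hl'.
move: hg; rewrite gapE // => hg.
rewrite /gtr in hll'.
have hr2 : fq l.+3 = fq l.+1 + fq l.
  rewrite fq_rec2; [by rewrite subn1 subn2 | lia].
case/andP: (hg) => _ /orP [/eqP e| h5]; last first.
- have := IH s l' hs hl'. rewrite !sc.
  have m1 : fq l'.+3 <= fq (l - 2) by rewrite fq_leE; lia.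
  have m2 : fq (l - 2) < fq (l.+1) by rewrite fq_ltE; lia.
  lia.
- subst l.
  
  case: s hs hl hlall hgall hl' => [|l'' s] hs hl hlall hgall hl'.
    have : fq l' < fq l'.+3 by rewrite fq_ltE; lia.
    rewrite !sc sc0; lia.
  case/leg_cons: (hl') => /andP [hl'' _] /andP [hg' _] hl''s.
  move: hlall hgall => /andP [hll'' _] /andP [hg'' _].
  move: hg' hg''; rewrite !gapE // => hg' hg''.
  have hle : l'' + 7 <= l'.+2 by lia.
  have := IH s l'' (ltnW hs) hl''s. rewrite !sc.
  have m1 : fq l''.+3 <= fq (l'.+2 - 4) by rewrite fq_leE; lia.
  have e3 : fq l'.+3 = fq l'.+2 + fq (l'.+2 - 4) by rewrite fq_rec //; lia.
  have m2 : fq l' < fq l'.+2 by rewrite fq_ltE; lia.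
  lia.
Qed.

Definition inr (N : nat) := fun l => (1 <= l) && (l <= N).

Fixpoint allbits n : seq (seq bool) :=
  if n is n'.+1 then map (cons true) (allbits n') ++ map (cons false) (allbits n')
  else [:: [::]].

Lemma allbitsP m : m \in allbits (size m).
Proof.
elim: m => [|b m IH] //=; rewrite mem_cat; case: b.
  by rewrite (map_f (cons true) IH).
by rewrite (map_f (cons false) IH) orbT.
Qed.

Lemma leg_mask N s : leg s -> all (inr N) s ->
  s = mask (map (fun x => x \in s) (rev (iota 1 N))) (rev (iota 1 N)).
Proof.
move=> /and3P [hs _ _] /allP ha.
rewrite -filter_mask.
apply: (irr_sorted_eq gtr_trans) => //.
- by move=> x; rewrite /gtr ltnn.
- apply: sorted_filter; first exact: gtr_trans.
  rewrite rev_sorted; exact: iota_ltn_sorted.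
- move=> x; rewrite mem_filter mem_rev mem_iota.
  case hx: (x \in s) => //=.
  by have := ha x hx; rewrite /inr add1n ltnS.
Qed.

Definition chk N := all (fun m => let t := mask m (rev (iota 1 N)) in
   ~~ (leg t && (sumn (map fq t) == fq N.+1))) (allbits N).

Lemma chk_ok N : chk N -> forall s, all (inr N) s -> leg s -> sumn (map fq s) != fq N.+1.
Proof.
move=> /allP H s ha hl.
have e := leg_mask N s hl ha.
set m := map _ _ in e.
have hm : m \in allbits N.
  by have := allbitsP m; rewrite /m size_map size_rev size_iota.
have := H m hm; rewrite /= -e hl /=. by [].
Qed.

Lemma chk_small : all chk (iota 0 9).
Proof. vm_compute. reflexivity. Qed.

Lemma all_inr N M s : all (inr N) s -> all (gtr M.+1) s -> all (inr M) s.
Proof.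
move=> /allP h1 /allP h2; apply/allP => x hx.
have := h1 x hx; have := h2 x hx; rewrite /inr /gtr; lia.
Qed.

Lemma NR N : forall s, all (inr N) s -> leg s -> sumn (map fq s) != fq N.+1.
Proof.
elim/ltn_ind: N => N IH s ha hl.
case: (leqP N 8) => hN.
  apply: chk_ok => //.
  by apply: (allP chk_small); rewrite mem_iota.
case: s ha hl => [|l s] ha hl.
  by rewrite sc0 eq_sym -lt0n fq_pos.
move: ha => /andP [hl0 ha].
case/leg_cons: (hl) => hgt hgap hls.
rewrite sc; apply/eqP => hsum.
have hl1 : 1 <= l <= N by [].
case: (leqP l (N - 2)) => hlN.
  have := bound (size s).+1 s l (ltnSn _) hl. rewrite sc.
  have : fq l.+3 <= fq N.+1 by rewrite fq_leE; lia.
  lia.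
have hrec : fq N.+1 = fq N + fq (N - 4) by apply: fq_rec; lia.
have hrec2 : fq N.+1 = fq (N - 1) + fq (N - 2) by apply: fq_rec2; lia.
have [e | hlt] : l = N \/ l < N by lia.
-
  subst l.
  have hs : sumn (map fq s) = fq (N - 4) by lia.
  case: s hs ha hl hgt hgap hls hsum => [|l' s] hs ha hl hgt hgap hls hsum.
    have hp : 0 < fq (N - 4) by apply: fq_pos; lia.
    by move: hs; rewrite sc0; lia.
  move: hgt hgap => /andP [hgt hgt'] /andP [hgap _].
  rewrite /gtr in hgt; move: hgap; rewrite gapE // => /andP [_ /orP [/eqP e | h5]].
    move: hs; rewrite sc; have : fq (N - 4) < fq l' by rewrite fq_ltE; lia.
    lia.
  case/leg_cons: (hls) => hgt2 _ hls'.
  have hlt : N - 5 < N by lia.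
  have H := IH (N - 5) hlt (l' :: s).
  have e5 : (N - 5).+1 = N - 4 by lia.
  rewrite e5 sc -hs eqxx in H.
  suff hA : all (inr (N - 5)) (l' :: s) by have := H hA hls.
  apply/andP; split; first by move: ha => /andP [+ _]; rewrite /inr; lia.
  apply: all_inr (_ : all (inr N) s) _.
    by move: ha => /andP [].
  apply/allP => x hx; move/allP: hgt2 => /(_ x hx); rewrite /gtr; lia.
-
  have el : l = N - 1 by lia.
  subst l.
  have hs : sumn (map fq s) = fq (N - 2) by lia.
  case: s hs ha hl hgt hgap hls hsum => [|l' s] hs ha hl hgt hgap hls hsum.
    have hp : 0 < fq (N - 2) by apply: fq_pos; lia.
    by move: hs; rewrite sc0; lia.
  move: hgt hgap => /andP [hgt hgt'] /andP [hgap hgap'].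
  rewrite /gtr in hgt; move: hgap; rewrite gapE // => /andP [_ /orP [/eqP e | h5]]; last first.
    have := bound (size s).+1 s l' (ltnSn _) hls.
    have : fq l'.+3 <= fq (N - 3) by rewrite fq_leE; lia.
    have : fq (N - 3) < fq (N - 2) by rewrite fq_ltE; lia.
    lia.
  have el' : l' = N - 3 by lia.
  subst l'.
  have hr3 : fq (N - 2) = fq (N - 3) + fq (N - 7).
    have := fq_rec (N - 3). have -> : (N - 3).+1 = N - 2 by lia.
    have -> : N - 3 - 4 = N - 7 by lia. apply; lia.
  have hs' : sumn (map fq s) = fq (N - 7) by move: hs; rewrite sc; lia.
  case: s hs' ha hl hgt' hgap' hls hsum hs => [|l'' s] hs' ha hl hgt' hgap' hls hsum hs.
    have hp : 0 < fq (N - 7) by apply: fq_pos; lia.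
    by move: hs'; rewrite sc0; lia.
  case/leg_cons: (hls) => /andP [hg2 _] /andP [hgap2 _] hls'.
  case/leg_cons: (hls') => hgt3 _ _.
  move: hgt' hgap' => /andP [hg1 _] /andP [hgap1 _].
  rewrite /gtr in hg1 hg2.
  move: hgap1 hgap2; rewrite !gapE // => hgap1 hgap2.
  have hlt8 : N - 8 < N by lia.
  have H := IH (N - 8) hlt8 (l'' :: s).
  have e8 : (N - 8).+1 = N - 7 by lia.
  rewrite e8 sc -hs' eqxx in H.
  suff hA : all (inr (N - 8)) (l'' :: s) by have := H hA hls'.
  move: ha => /andP [_ /andP [hl''0 ha]].
  apply/andP; split; first by move: hl''0; rewrite /inr; lia.
  apply: all_inr ha _.
  apply/allP => x hx; move/allP: hgt3 => /(_ x hx); rewrite /gtr; lia.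
Qed.


Lemma all_inr_le N M s : N <= M -> all (inr N) s -> all (inr M) s.
Proof.
move=> h /allP H; apply/allP => x hx; have := H x hx; rewrite /inr; lia.
Qed.

Lemma leg_single m : leg [:: m].
Proof. rewrite /leg /= !inE; apply/negP => /andP [/eqP <-]. by []. Qed.

Lemma EX N : forall m, m < fq N.+1 ->
  exists s, [/\ all (inr N) s, leg s & sumn (map fq s) = m].
Proof.
elim/ltn_ind: N => N IH m hm.
case: (leqP N 5) => hN.
  case: (posnP m) => [-> | hm0].
    by exists [::]; split.
  case: (leqP m 5) => hm5.
    exists [:: m]; split.
    - rewrite /= andbT /inr hm0 /=.
      by case: N IH hm hN => [|[|[|[|[|[|N]]]]]] //= _; lia.
    - exact: leg_single.
    - by case: m hm hm0 hm5 => [|[|[|[|[|[|m]]]]]].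
  have e6 : m = 6 /\ N = 5.
    by case: N IH hm hN => [|[|[|[|[|[|N]]]]]] //= _; lia.
  case: e6 => -> ->.
  by exists [:: 4; 2].
case: (ltnP m (fq N)) => hmN.
  have hlt : N - 1 < N by lia.
  have e1 : (N - 1).+1 = N by lia.
  have hm' : m < fq (N - 1).+1 by rewrite e1.
  have [s [h1 h2 h3]] := IH (N - 1) hlt m hm'.
  exists s; split => //; apply: all_inr_le h1; lia.
have hrec : fq N.+1 = fq N + fq (N - 4) by apply: fq_rec; lia.
have hlt : N - 5 < N by lia.
have e5 : (N - 5).+1 = N - 4 by lia.
have hx : m - fq N < fq (N - 5).+1 by rewrite e5; lia.
have [s [h1 h2 h3]] := IH (N - 5) hlt (m - fq N) hx.
exists (N :: s); split.
- apply/andP; split; [rewrite /inr; lia | apply: all_inr_le h1; lia].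
- case/and3P: h2 => hs hp h13.
  have hall : all (gtr N) s.
    apply/allP => x hx'; move/allP: h1 => /(_ x hx'); rewrite /inr /gtr; lia.
  rewrite /leg pairwise_cons /= (path_sortedE gtr_trans) hall hs hp andbT /=.
  rewrite andbT; apply/andP; split.
    apply/allP => x hx'; move/allP: h1 => /(_ x hx').
    rewrite /inr => hb; rewrite gapE; [lia | lia].
  rewrite !inE.
  have -> : (1 == N) = false by apply/eqP; lia.
  by have -> : (3 == N) = false by apply/eqP; lia.
- rewrite sc h3; lia.
Qed.

Lemma transfer (q : nat -> nat) N : (forall j, 1 <= j <= N -> q j = fq j) ->
  forall m, has_FQdecomp q N m <->
    exists s, [/\ all (inr N) s, leg s & sumn (map fq s) = m].
Proof.
move=> hq m.
have key : forall s, all (inr N) s -> map q s = map fq s.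
  move=> s /allP ha; apply/eq_in_map => x hx; apply: hq; exact: ha.
split.
- case=> s [ha hl hs]; exists s; split => //.
  + rewrite -legalE; move: hl; rewrite /FQlegal.
    rewrite -(sorted_map (f:=q) (e':=fun x y => y < x)).
    rewrite -(sorted_map (f:=fq) (e':=fun x y => y < x)) key //.
  + by rewrite -key.
- case=> s [ha hl hs]; exists s; split => //.
  + rewrite -legalE in hl; move: hl; rewrite /FQlegal.
    rewrite -(sorted_map (f:=q) (e':=fun x y => y < x)).
    rewrite -(sorted_map (f:=fq) (e':=fun x y => y < x)) key //.
  + by rewrite key.
Qed.

Lemma q_fq q : is_FQ_sequence q -> forall n, 1 <= n -> q n = fq n.
Proof.
case=> h1 h2.
elim/ltn_ind => n IH hn.
case: (leqP n 1) => hn1.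
  by have -> : n = 1 by lia.
case: (h2 n hn1) => hpos hnot hall.
have agree : forall j, 1 <= j <= n.-1 -> q j = fq j.
  move=> j hj; apply: IH; lia.
have en : (n.-1).+1 = n by lia.
case: (ltngtP (q n) (fq n)) => // hc.
- exfalso; apply: hnot; apply/(transfer _ _ agree (q n)).
  apply: EX; rewrite en //.
- exfalso.
  have hf : 0 < fq n < q n by rewrite hc andbT fq_pos //; lia.
  have := hall _ hf => /(transfer _ _ agree (fq n)) [s [ha hl hs]].
  by have := NR _ _ ha hl; rewrite hs en eqxx.
Qed.


Section G.
Variable q : nat -> nat.
Hypothesis Hq : forall n, 1 <= n -> q n = fq n.

Lemma fq6 n : fq n <> 6.
Proof.
case: (leqP n 5) => h.
  have : fq n <= fq 5 by rewrite fq_leE. simpl; lia.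
have : fq 6 <= fq n by rewrite fq_leE. simpl; lia.
Qed.

Lemma gdet m s1 : greedy6 q m s1 -> forall m' s2, greedy6 q m' s2 -> m = m' -> s1 = s2.
Proof.
elim=> [|n hn|hne|m0 l s hm hnt h6 hl hlt Hs IHs] m' s2 H2 e;
  case: H2 e => [|n' hn'|hne'|m1 l' s' hm' hnt' h6' hl' hlt' Hs'] e //.
all: try by have := hne' n hn.
all: try by have := hnt' n hn.
all: try by have := hne n' hn'; rewrite -e.
all: try by have := h6'; rewrite -e.
all: try by move: hm; rewrite e.
all: try by move: hm'; rewrite -e.
all: try by have := hnt n' hn' (esym e).
all: try by have := fq_pos n'; rewrite -Hq //; lia.
all: try by have := fq_pos n; rewrite -Hq //; lia.
all: try by move: e; rewrite !Hq // => /fq_inj ->.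
- have ell : l = l'.
    move: hlt hlt'; rewrite !Hq // => /andP [a b] /andP [c d].
    case: (ltngtP l l') => // hc.
      have : fq l.+1 <= fq l' by rewrite fq_leE.
      lia.
    have : fq l'.+1 <= fq l by rewrite fq_leE.
    lia.
  subst l'; congr (_ :: _); apply: IHs Hs' _; by rewrite e.
Qed.

Lemma bracket m : 1 <= m -> exists l, 1 <= l /\ fq l <= m < fq l.+1.
Proof.
elim: m => // m IH hm.
case: (posnP m) => [-> | hm0].
  by exists 1.
case: (IH hm0) => l [hl /andP [a b]].
case: (ltnP m.+1 (fq l.+1)) => hc.
  exists l; split => //; lia.
exists l.+1; split => //.
have : fq l.+1 < fq l.+2 by rewrite fq_ltE.
lia.
Qed.

Lemma gex m : exists s, greedy6 q m s.
Proof.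
elim/ltn_ind: m => m IH.
case: (posnP m) => [-> | hm0].
  by exists [::]; constructor.
case: (boolP (has (fun n => fq n == m) (iota 1 m))) => hterm.
  case/hasP: hterm => n; rewrite mem_iota => hn /eqP <-.
  exists [:: n]; rewrite -Hq; last lia.
  constructor; lia.
have hnt : forall n, 1 <= n -> q n <> m.
  move=> n hn e; move/hasPn: hterm => H.
  have hin : n \in iota 1 m by rewrite mem_iota; have := fq_ge n; rewrite -Hq // e; lia.
  by have := H n hin; rewrite -Hq // e eqxx.
case: (eqVneq m 6) => [e6 | h6].
  subst m; exists [:: 4; 2]; constructor.
  move=> n hn; rewrite Hq //; exact: fq6.
case: (bracket m hm0) => l [hl /andP [a b]].
have hlt : fq l < m.
  rewrite ltn_neqAle a andbT; apply/eqP => e; apply: (hnt l hl); rewrite Hq //.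
have hlt2 : m - q l < m by rewrite Hq //; have := fq_pos l hl; lia.
case: (IH _ hlt2) => s Hs.
exists (l :: s); apply: greedy6_step => //.
- exact/eqP.
- by rewrite !Hq // hlt b.
Qed.

Definition P m k := exists s, greedy6 q m s /\ size s = k.

Lemma Pchar m s k : greedy6 q m s -> (P m k <-> size s = k).
Proof.
move=> H; split.
  by case=> s' [H' <-]; rewrite (gdet _ _ H _ _ H' erefl).
by move=> <-; exists s.
Qed.

Definition Bk k m := `[< P m k >].

Lemma BkE m s k : greedy6 q m s -> Bk k m = (size s == k).
Proof. move=> H; apply: asbool_equiv_eqP (Pchar _ _ k H); exact: eqP. Qed.

Lemma gstep n x s : 6 <= n -> x < fq (n - 4) -> greedy6 q x s ->
  greedy6 q (fq n + x) (n :: s).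
Proof.
move=> hn hx H.
have hrec : fq n.+1 = fq n + fq (n - 4) by apply: fq_rec.
case: (posnP x) => [ex | hx0].
  subst x; rewrite (gdet _ _ H _ _ (greedy6_zero q) erefl) addn0 -Hq; last lia.
  constructor; lia.
have h7 : fq 6 <= fq n by rewrite fq_leE.
apply: greedy6_step.
- lia.
- move=> n' hn'; rewrite Hq // => e.
  have h1 : fq n < fq n' by lia.
  have h2 : fq n' < fq n.+1 by lia.
  rewrite !fq_ltE in h1 h2; lia.
- simpl in h7; lia.
- lia.
- rewrite !Hq; [|lia|lia]; apply/andP; split; lia.
- by rewrite Hq ?addKn //; lia.
Qed.

Definition Q n k := count (Bk k) (iota 0 (fq n.+1)).

Lemma qnkE n k : qnk q n k = Q n k.
Proof. by rewrite /qnk (cardc _ (fun m => `[< exists s, greedy6 q m s /\ size s = k >])) Hq. Qed.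


Lemma Qrec n k : 6 <= n -> 1 <= k -> Q n k = Q (n - 1) k + Q (n - 5) k.-1.
Proof.
move=> hn hk.
rewrite /Q fq_rec // iotaD count_cat add0n.
have e1 : (n - 1).+1 = n by lia.
have e5 : (n - 5).+1 = n - 4 by lia.
rewrite e1 e5; congr (_ + _).
rewrite -[fq n]addn0 iotaDl count_map.
apply: eq_in_count => x; rewrite mem_iota => /andP [_ hx].
case: (gex x) => s Hs.
rewrite /= (BkE _ _ k (gstep _ _ _ hn hx Hs)) (BkE _ _ _ Hs) /=.
by case: k hk.
Qed.

Definition cs m := if m == 0 then 0 else if m == 6 then 2 else 1.

Lemma Bsmall k m : m <= 6 -> Bk k m = (k == cs m).
Proof.
case: m => [|m] h.
  by rewrite (BkE _ _ k (greedy6_zero q)).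
case: (eqVneq m 5) => [-> | h5].
  have H : greedy6 q 6 [:: 4; 2] by constructor; move=> n hn; rewrite Hq //; exact: fq6.
  by rewrite (BkE _ _ k H) eq_sym.
have H := greedy6_term q (n := m.+1) isT.
rewrite Hq // in H.
have e : fq m.+1 = m.+1.
  by move: h h5; case: m {H} => [|[|[|[|[|[|m]]]]]] /=; lia.
rewrite e in H; rewrite (BkE _ _ k H) eq_sym /cs /=.
by have -> : (m.+1 == 6) = false by apply/eqP; lia.
Qed.

Lemma Qbase n k : n <= 5 ->
  Q n k = (k == 0) + (k == 1) * n + (k == 2) * (n == 5).
Proof.
move=> hn.
have hle : fq n.+1 <= 7.
  have : fq n.+1 <= fq 6 by rewrite fq_leE.
  by [].
rewrite /Q (eq_in_count (a2 := fun m => k == cs m)); last first.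
  move=> x; rewrite mem_iota => /andP [_ hx]; apply: Bsmall; lia.
by case: n hn {hle} => [|[|[|[|[|[|n]]]]]] //= _; case: k => [|[|[|k]]].
Qed.

Lemma Q0 n : Q n 0 = 1.
Proof.
have hx : forall m, Bk 0 m = (m == 0).
  move=> m; case: (gex m) => s Hs; rewrite (BkE _ _ 0 Hs).
  case: Hs => //.
  - by move=> n0 hn; have := fq_pos n0 hn; rewrite -Hq //; case: (q n0).
  - by move=> m0 l s0 hm; case: m0 hm.
rewrite /Q (eq_count hx).
have : 0 < fq n.+1 by apply: fq_pos.
case: (fq n.+1) => // N _.
rewrite /= -(addn0 1) (iotaDl 1 0) count_map.
rewrite (eq_count (a2 := pred0)) ?count_pred0 //.
Qed.

End G.

Section FPS.
Import GRing.Theory.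
Local Open Scope ring_scope.

Definition mono (c d : nat) : fps2 := fun n k => ((n == c) && (k == d) : nat)%:R.

Lemma L0 (G : nat -> int) n c :
  \sum_(i < n.+1) G i * ((i == c :> nat) : nat)%:R = if (c <= n)%N then G c else 0.
Proof.
rewrite (eq_bigr (fun i : 'I_n.+1 => if (i == c :> nat) then G i else 0)); last first.
  by move=> i _; case: (i == c :> nat); rewrite ?mulr1 ?mulr0.
by rewrite -big_mkcond big_ord1_eq ltnS.
Qed.

Lemma L1 (G : nat -> int) n c :
  \sum_(i < n.+1) G i * (((n - i)%N == c) : nat)%:R = if (c <= n)%N then G (n - c)%N else 0.
Proof.
case: (leqP c n) => hc.
  have := L0 G n (n - c); rewrite leq_subr => <-.
  apply: eq_bigr => i _; congr (_ * (nat_of_bool _)%:R).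
  move: (ltn_ord i) => hi; apply/eqP/eqP; lia.
rewrite big1 // => i _.
have -> : ((n - i)%N == c) = false by apply/eqP; have := ltn_ord i; lia.
by rewrite mulr0.
Qed.

Lemma mul_mono_r (a b : fps2) c d (hb : forall n k, b n k = mono c d n k) n k :
  fps2_mul a b n k = if (c <= n)%N then (if (d <= k)%N then a (n - c)%N (k - d)%N else 0) else 0.
Proof.
rewrite /fps2_mul.
rewrite (eq_bigr (fun i : 'I_n.+1 => (if (d <= k)%N then a i (k - d)%N else 0) * (((n - i)%N == c) : nat)%:R)).
  by rewrite (L1 (fun i => if (d <= k)%N then a i (k - d)%N else 0)).
move=> i _.
rewrite (eq_bigr (fun j : 'I_k.+1 => (a i j * (((k - j)%N == d) : nat)%:R) * (((n - i)%N == c) : nat)%:R)).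
  by rewrite -mulr_suml (L1 (fun j => a i j)).
move=> j _; rewrite hb /mono -mulrA; congr (_ * _).
by case: ((n - i)%N == c); case: ((k - j)%N == d); rewrite /= ?mulr0 ?mulr1 ?mul0r.
Qed.

Lemma mul_mono_l (a b : fps2) c d (hb : forall n k, b n k = mono c d n k) n k :
  fps2_mul b a n k = if (c <= n)%N then (if (d <= k)%N then a (n - c)%N (k - d)%N else 0) else 0.
Proof.
rewrite /fps2_mul.
rewrite (eq_bigr (fun i : 'I_n.+1 => (if (d <= k)%N then a (n - i)%N (k - d)%N else 0) * ((i == c :> nat) : nat)%:R)).
  by rewrite (L0 (fun i => if (d <= k)%N then a (n - i)%N (k - d)%N else 0)).
move=> i _.
rewrite (eq_bigr (fun j : 'I_k.+1 => (a (n - i)%N (k - j)%N * ((j == d :> nat) : nat)%:R) * ((i == c :> nat) : nat)%:R)).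
  by rewrite -mulr_suml (L0 (fun j => a (n - i)%N (k - j)%N)).
move=> j _; rewrite hb /mono mulrC -mulrA; congr (_ * _).
by case: (i == c :> nat); case: (j == d :> nat); rewrite /= ?mulr0 ?mulr1 ?mul0r.
Qed.

Lemma mul_addr (a b c : fps2) n k :
  fps2_mul a (fps2_add b c) n k = fps2_mul a b n k + fps2_mul a c n k.
Proof.
rewrite /fps2_mul /fps2_add -big_split; apply: eq_bigr => i _.
rewrite -big_split; apply: eq_bigr => j _; exact: mulrDr.
Qed.

Lemma mul_oppr (a b : fps2) n k :
  fps2_mul a (fps2_opp b) n k = - fps2_mul a b n k.
Proof.
rewrite /fps2_mul /fps2_opp -sumrN; apply: eq_bigr => i _.
rewrite -sumrN; apply: eq_bigr => j _; exact: mulrN.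
Qed.

Lemma powX e n k : fps2_pow fps2_X e n k = mono e 0 n k.
Proof.
elim: e n k => [|e IH] n k //.
rewrite /fps2_pow /= -/(fps2_pow fps2_X e).
rewrite (mul_mono_l _ _ 1 0 (fun _ _ => erefl)) IH /mono.
case: n => [|n] //=; rewrite subn0 subn1 /=.
by [].
Qed.

Lemma powY e n k : fps2_pow fps2_Y e n k = mono 0 e n k.
Proof.
elim: e n k => [|e IH] n k //.
rewrite /fps2_pow /= -/(fps2_pow fps2_Y e).
rewrite (mul_mono_l _ _ 0 1 (fun _ _ => erefl)) IH /mono.
case: k => [|k] //=; rewrite ?subn0 ?subn1 /= ?andbF //.
Qed.

End FPS.
Import GRing.Theory.

Section Arith.
Variable Q : nat -> nat -> nat.
Hypothesis Qr : forall n k, 6 <= n -> 1 <= k -> Q n k = Q (n - 1) k + Q (n - 5) k.-1.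
Hypothesis Qb : forall n k, n <= 5 -> Q n k = (k == 0) + (k == 1) * n + (k == 2) * (n == 5).
Hypothesis Qz : forall n, Q n 0 = 1.

Lemma A_Q1 n : Q n 1 = n.
Proof.
elim/ltn_ind: n => n IH.
case: (leqP n 5) => hn.
  by rewrite Qb // /= mul1n mul0n addn0.
rewrite Qr // IH; last lia.
rewrite Qz; lia.
Qed.

Lemma A_Q2 d : Q (d + 5) 2 = 1 + d * d.+1 %/ 2.
Proof.
elim: d => [|d IH].
  by rewrite Qb.
rewrite Qr; last by []; last lia.
have -> : d.+1 + 5 - 1 = d + 5 by lia.
have -> : d.+1 + 5 - 5 = d.+1 by lia.
rewrite IH A_Q1 /=.
have -> : d.+1 * d.+2 = d.+1 * 2 + d * d.+1 by lia.
rewrite divnMDl //; lia.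
Qed.

Lemma A_Z2 n : n <= 4 -> Q n 2 = 0.
Proof. by move=> h; rewrite Qb /=; [rewrite mul0n; case: n h => [|[|[|[|[|n]]]]] | lia]. Qed.

Lemma A_Z3 n : forall k, 3 <= k -> n < 5 * (k - 1) -> Q n k = 0.
Proof.
elim/ltn_ind: n => n IH k hk hn.
case: (leqP n 5) => h5.
  rewrite Qb //. by case: k hk {hn} => [|[|[|k]]].
rewrite Qr //; last lia.
rewrite IH //; last lia; last lia.
case: (leqP k 3) => hk3.
  have -> : k = 3 by lia.
  apply: A_Z2; lia.
rewrite IH //; lia.
Qed.

End Arith.

Lemma addE (a b : fps2) n k : fps2_add a b n k = (a n k + b n k)%R.
Proof. by []. Qed.

Lemma hYX5 n k : fps2_mul fps2_Y (fps2_pow fps2_X 5) n k = mono 5 1 n k.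
Proof.
rewrite (mul_mono_l _ _ 0 1 (fun _ _ => erefl)) powX /mono /=.
case: k => [|k]; first by rewrite andbF.
by rewrite subn0 subSS subn0.
Qed.

Theorem propositionB1 (q : nat -> nat) (hq : is_FQ_sequence q) :
  ((forall n, qnk q n 0 = 1) /\ qnk q 5 2 = 1) /\
  (forall n, qnk q n 1 = n) /\
  (forall n, 6 <= n -> qnk q n 2 = 1 + (n - 5) * (n - 4) %/ 2) /\
  (forall n k, 3 <= k -> 5 * (k - 1) <= n ->
     qnk q n k = qnk q (n - 5) (k - 1) + qnk q (n - 1) k) /\
  ((forall n k, 3 <= k -> n < 5 * (k - 1) -> qnk q n k = 0) /\
   (forall n, n <= 4 -> qnk q n 2 = 0)) /\
  fps2_mul (FQ_H q) FQ_denom = FQ_numer.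
Proof.
have Hq := q_fq q hq.
have Qr := Qrec q Hq.
have Qb := Qbase q Hq.
have Qz := Q0 q Hq.
have E := qnkE q Hq.
split; [split|split; [|split; [|split; [|split; [split|]]]]].
- by move=> n; rewrite E Qz.
- by rewrite E Qb.
- by move=> n; rewrite E (A_Q1 _ Qr Qb Qz).
- move=> n hn; rewrite E.
  have := A_Q2 _ Qr Qb Qz (n - 5).
  have -> : n - 5 + 5 = n by lia.
  move=> ->; congr (_ + (_ %/ 2)); lia.
- move=> n k hk hn; rewrite !E Qr; [|lia|lia].
  have -> : k.-1 = k - 1 by lia.
  by rewrite addnC.
- move=> n k hk hn; rewrite E; exact: A_Z3 _ Qr Qb n k hk hn.
- move=> n hn; rewrite E; exact: A_Z2 _ Qb n hn.
apply/funext => n; apply/funext => k.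
rewrite /FQ_denom mul_addr mul_oppr mul_addr.
rewrite (mul_mono_r _ _ 0 0 (fun _ _ => erefl)) (mul_mono_r _ _ 1 0 (fun _ _ => erefl)).
rewrite (mul_mono_r _ _ 5 1 hYX5).
rewrite /FQ_numer.
rewrite !addE (mul_mono_r _ fps2_Y 0 1 (fun _ _ => erefl)) (mul_mono_l _ _ 5 0 (powX 5)) powY.
rewrite !addE !powX /FQ_H !E !subn0 /=.
case: (leqP 6 n) => hn.
  have [m ->] : exists m, n = m.+3.+3 by exists (n - 6); lia.
  have -> : m.+3.+3 - 1 = m.+3.+2 by lia.
  have -> : m.+3.+3 - 5 = m.+1 by lia.
  rewrite /mono /fps2_one /fps2_X /=.
  case: k => [|k].
    by rewrite !Qz /=.
  rewrite Qr //; have -> : m.+3.+3 - 5 = m.+1 by lia.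
  have -> : k.+1 - 1 = k by lia.
  rewrite /= PoszD; exact: GRing.subrr.
case: n hn => [|[|[|[|[|[|n]]]]]] // _; case: k => [|[|[|k]]]; rewrite ?Qb //=.
all: try done.
all: rewrite ?subSS ?subn0 ?muln0 /=; try done.
Qed.
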